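(* Let $\theta,\phi,\rho\in\mathrm{Mat}_{s\times s}(\bar k[\sigma])$ satisfy $(\partial\theta-T\mathbf 1_s)^s=0$, $\theta\phi=\phi\rho$, $(\partial\rho-T\mathbf 1_s)^s=0$, and assume the map $x\mapsto x\phi$ on $\mathrm{Mat}_{1\times s}(\bar k[\sigma])$ is injective. Then $\det\partial\phi\ne0$.
   Context: $\bar k$ is the algebraic closure of $k=\mathbb F_q(T)$. $\bar k[\sigma]$ is the noncommutative polynomial ring in $\sigma$ with $\sigma x=x^{q^{-1}}\sigma$ for $x\in\bar k$. For a matrix $\phi=\sum_i a_{(i)}\sigma^i$ with entries in $\bar k[\sigma]$ (the $a_{(i)}$ matrices over $\bar k$), $\partial\phi:=a_{(0)}$. $\mathbf 1_s$ is the $s\times s$ identity matrix. *)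

(* Defs.v *)
From HB Require Import structures.
From mathcomp Require Import all_boot all_order all_algebra.
Set Implicit Arguments. Unset Strict Implicit. Unset Printing Implicit Defensive.
Import GRing.Theory.
Local Open Scope ring_scope.

Lemma qroot_ex (K : closedFieldType) (n : nat) (x : K) :
  exists y : K, y ^+ n.+1 == x.
Proof.
have [y Hy] := @solve_monicpoly K n.+1 (fun i => if i == 0%N then x else 0) isT.
exists y; apply/eqP; rewrite Hy big_ord_recl /= expr0 mulr1.
by rewrite big1 ?addr0 // => i _; rewrite mul0r.
Qed.

(* The q-th root map x |-> x^(1/q) on K (unique when K has characteristic p
   and q is a power of p, which is the case below). *)
Definition qroot (K : closedFieldType) (q : nat) (x : K) : K :=
  xchoose (qroot_ex q.-1 x).

(* An element of Mat_{m x n}(K[sigma]) is represented by its finite sequence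
   of coefficient matrices [a_(0); a_(1); ...], i.e. sum_i a_(i) sigma^i.
   scoef A i = a_(i) (zero beyond the end of the sequence). *)
Definition scoef (K : nzRingType) (m n : nat) (A : seq 'M[K]_(m, n)) (i : nat)
  : 'M[K]_(m, n) := nth 0 A i.

(* The derivative/constant term  \partial A = a_(0). *)
Definition sdel (K : nzRingType) (m n : nat) (A : seq 'M[K]_(m, n)) : 'M[K]_(m, n) :=
  scoef A 0.

(* k-th coefficient matrix of the product A B in K[sigma], with the twisted
   rule  sigma x = x^(q^-1) sigma, hence  (a sigma^i)(b sigma^j) =
   a b^(q^-i) sigma^(i+j)  (b^(q^-i) taken entrywise). *)
Definition smul (K : closedFieldType) (q : nat) (m n p : nat)
  (A : seq 'M[K]_(m, n)) (B : seq 'M[K]_(n, p)) (k : nat) : 'M[K]_(m, p) :=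
  \sum_(i < k.+1) scoef A i *m map_mx (iter i (qroot q)) (scoef B (k - i)).

(* Main.v *)
Require Import Defs.
From HB Require Import structures.
From mathcomp Require Import all_boot all_order all_algebra all_field.
From mathcomp Require Import zify.
Import GRing.Theory.
Local Open Scope ring_scope.
Set Implicit Arguments. Unset Strict Implicit. Unset Printing Implicit Defensive.
Section Frob.
Variables (K : fieldType) (q : nat) (r : K -> K).
Hypothesis q_gt0 : (0 < q)%N.
Hypothesis frobD : forall x y : K, (x + y) ^+ q = x ^+ q + y ^+ q.
Hypothesis rK : forall x, r x ^+ q = x.

Lemma frobN (x : K) : (- x) ^+ q = - x ^+ q.
Proof.
apply/eqP; rewrite -subr_eq0 opprK -frobD.
by rewrite addrC subrr expr0n; case: q q_gt0.
Qed.

Lemma frob_inj (x y : K) : x ^+ q = y ^+ q -> x = y.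
Proof.
move=> h; apply/eqP; rewrite -subr_eq0 -[_ == 0](andTb) -q_gt0 -expf_eq0.
by rewrite frobD frobN h subrr.
Qed.

Lemma rB : {morph r : x y / x - y}.
Proof. by move=> x y; apply: frob_inj; rewrite frobD frobN !rK. Qed.
Lemma rM : {morph r : x y / x * y}.
Proof. by move=> x y; apply: frob_inj; rewrite exprMn !rK. Qed.
Lemma r1 : r 1 = 1.
Proof. by apply: frob_inj; rewrite rK expr1n. Qed.
Lemma r_inj : injective r.
Proof. by move=> x y h; rewrite -(rK x) -(rK y) h. Qed.

HB.instance Definition _ := GRing.isZmodMorphism.Build K K r rB.
HB.instance Definition _ := GRing.isMonoidMorphism.Build K K r (conj r1 rM).


Fixpoint sz (s M : nat) : nat := if M is M'.+1 then (s + sz s M')%N else 0%N.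

Variable s : nat.

Definition tw m n (f : nat -> 'M[K]_(m, n)) k := map_mx r (f k).
Definition sm m n p (f : nat -> 'M[K]_(m, n)) (g : nat -> 'M[K]_(n, p)) k :=
  \sum_(i < k.+1) f i *m map_mx (iter i r) (g (k - i)%N).

Fixpoint Row m M (f : nat -> 'M[K]_(m, s)) : 'M[K]_(m, sz s M) :=
  match M return 'M[K]_(m, sz s M) with
  | 0%N => 0
  | M'.+1 => row_mx (f 0%N) (Row M' (fun k => f k.+1))
  end.

Fixpoint Big M (f : nat -> 'M[K]_s) : 'M[K]_(sz s M) :=
  match M return 'M[K]_(sz s M) with
  | 0%N => 0
  | M'.+1 => block_mx (f 0%N) (Row M' (fun k => f k.+1)) 0 (Big M' (tw f))
  end.

Lemma Row_ext m M (f g : nat -> 'M[K]_(m, s)) :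
  (forall k, f k = g k) -> Row M f = Row M g.
Proof.
elim: M f g => [|M IH] f g h //=; rewrite h; congr row_mx; exact: IH.
Qed.

Lemma Row_add m M (f g : nat -> 'M[K]_(m, s)) :
  Row M f + Row M g = Row M (fun k => f k + g k).
Proof. by elim: M f g => [|M IH] f g /=; rewrite ?addr0 // add_row_mx IH. Qed.

Lemma Row_mull l m M (a : 'M[K]_(l, m)) (f : nat -> 'M[K]_(m, s)) :
  a *m Row M f = Row M (fun k => a *m f k).
Proof. by elim: M f => [|M IH] f /=; rewrite ?mulmx0 // mul_mx_row IH. Qed.

Lemma map_iterS m n (A : 'M[K]_(m, n)) i :
  map_mx (iter i r) (map_mx r A) = map_mx (iter i.+1 r) A.
Proof. by apply/matrixP => a b; rewrite !mxE iterSr. Qed.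

Lemma sm0 m n p (f : nat -> 'M[K]_(m, n)) (g : nat -> 'M[K]_(n, p)) :
  sm f g 0 = f 0%N *m g 0%N.
Proof.
rewrite /sm big_ord1 /=; congr (_ *m _).
by apply/matrixP => a b; rewrite !mxE.
Qed.

Lemma smS m n p (f : nat -> 'M[K]_(m, n)) (g : nat -> 'M[K]_(n, p)) k :
  sm f g k.+1 = f 0%N *m g k.+1 + sm (fun k => f k.+1) (tw g) k.
Proof.
rewrite /sm big_ord_recl /=; congr (_ + _).
  by congr (_ *m _); apply/matrixP => a b; rewrite !mxE.
apply: eq_bigr => i _; rewrite /bump /= add1n subSS /tw map_iterS //.
Qed.

Lemma Row_Big m M (f : nat -> 'M[K]_(m, s)) g :
  Row M f *m Big M g = Row M (sm f g).
Proof.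
elim: M f g => [|M IH] f g /=; first by rewrite mulmx0.
rewrite mul_row_block mulmx0 addr0 IH Row_mull Row_add sm0.
by congr row_mx; apply: Row_ext => k; rewrite smS.
Qed.

Lemma Big_ext M (f g : nat -> 'M[K]_s) :
  (forall k, f k = g k) -> Big M f = Big M g.
Proof.
elim: M f g => [|M IH] f g h //=; rewrite h (Row_ext _ (fun k => h k.+1)).
by rewrite (IH (tw f) (tw g)) // => k; rewrite /tw h.
Qed.

Lemma map_mx_sum m n (I : finType) (F0 : I -> 'M[K]_(m, n)) :
  map_mx r (\sum_i F0 i) = \sum_i map_mx r (F0 i).
Proof. by rewrite raddf_sum. Qed.

Lemma tw_sm m n p (f : nat -> 'M[K]_(m, n)) (g : nat -> 'M[K]_(n, p)) k :
  tw (sm f g) k = sm (tw f) (tw g) k.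
Proof.
rewrite /tw /sm raddf_sum; apply: eq_bigr => i _.
rewrite /= map_mxM; congr (_ *m _).
by apply/matrixP => a b; rewrite !mxE -iterSr iterS.
Qed.

Lemma Big_mul M (f g : nat -> 'M[K]_s) :
  Big M f *m Big M g = Big M (sm f g).
Proof.
elim: M f g => [|M IH] f g /=; first by rewrite mulmx0.
rewrite mulmx_block !mulmx0 !mul0mx !addr0 add0r IH sm0.
congr block_mx.
  have := @Row_Big _ M.+1 f g.
  rewrite /= mul_row_block mulmx0 addr0 => /eq_row_mx [_ ->].
  by apply: Row_ext => k.
by apply: Big_ext => k; rewrite tw_sm.
Qed.


Fixpoint coef m M : 'M[K]_(m, sz s M) -> nat -> 'M[K]_(m, s) :=
  match M return 'M[K]_(m, sz s M) -> nat -> 'M[K]_(m, s) with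
  | 0%N => fun _ _ => 0
  | M'.+1 => fun (v : 'M[K]_(m, s + sz s M')) k =>
      if k is k'.+1 then coef (rsubmx v) k' else lsubmx v
  end.

Lemma coef_add m M (u v : 'M[K]_(m, sz s M)) k :
  coef (u + v) k = coef u k + coef v k.
Proof.
elim: M u v k => [|M IH] u v [|k] /=; rewrite ?addr0 //.
  by rewrite linearD.
by rewrite linearD IH.
Qed.

Lemma coef_Row m M (f : nat -> 'M[K]_(m, s)) k :
  (k < M)%N -> coef (Row M f) k = f k.
Proof.
elim: M f k => [|M IH] f [|k] //= ltk; first by rewrite row_mxKl.
by rewrite row_mxKr IH.
Qed.

Lemma coef_Big m M (v : 'M[K]_(m, sz s M)) f k :
  (k < M)%N -> coef (v *m Big M f) k = sm (coef v) f k.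
Proof.
elim: M v f k => [|M IH] v f k //= ltk.
rewrite -[v]hsubmxK mul_row_block mulmx0 addr0.
case: k ltk => [|k] ltk.
  by rewrite row_mxKl sm0 /= row_mxKl.
rewrite row_mxKr coef_add Row_mull coef_Row // IH // smS /= row_mxKl.
by rewrite row_mxKr.
Qed.

Lemma coef_eq0 m M (v : 'M[K]_(m, sz s M)) :
  (forall k, (k < M)%N -> coef v k = 0) -> v = 0.
Proof.
elim: M v => [|M IH] v h /=; first by apply/matrixP => i [].
have h0 : lsubmx v = 0 := h 0%N isT.
rewrite -[v]hsubmxK h0 (IH (rsubmx v)) ?row_mx0 // => k ltk.
exact: (h k.+1).
Qed.

Lemma coef0 m M k : coef (0 : 'M[K]_(m, sz s M)) k = 0.
Proof. by elim: M k => [|M IH] [|k] //=; rewrite linear0 // IH. Qed.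

Fixpoint Pr M N : 'M[K]_(sz s M) :=
  match M return 'M[K]_(sz s M) with
  | 0%N => 0
  | M'.+1 => block_mx (if N is 0%N then 0 else 1%:M) 0 0 (Pr M' N.-1)
  end.

Lemma rank_Pr M N : (N <= M)%N -> \rank (Pr M N) = sz s N.
Proof.
elim: M N => [|M IH] [|N] //= le; first by rewrite mxrank0.
  by rewrite rank_diag_block_mx mxrank0 IH.
by rewrite rank_diag_block_mx mxrank1 IH.
Qed.

Lemma coef_Pr m M N (w : 'M[K]_(m, sz s M)) k :
  (N <= k)%N -> coef (w *m Pr M N) k = 0.
Proof.
elim: M N w k => [|M IH] N w k //= le.
rewrite -[w]hsubmxK mul_row_block !mulmx0 addr0 add0r.
case: k le => [|k] le.
  by case: N le => // _; rewrite row_mxKl mulmx0.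
by rewrite row_mxKr IH //; case: N le.
Qed.


Lemma mulE n (X Y : 'M[K]_n) : X * Y = X *m Y. Proof. by []. Qed.

Lemma detX n (X : 'M[K]_n) k : \det (X ^+ k) = \det X ^+ k.
Proof.
elim: k => [|k IH]; first by rewrite !expr0 det1.
by rewrite !exprS -mulmxE det_mulmx IH.
Qed.

Lemma map_mxX (X : 'M[K]_s) k : map_mx r (X ^+ k) = map_mx r X ^+ k.
Proof.
elim: k => [|k IH]; first by rewrite !expr0 map_mx1.
by rewrite !exprS -!mulmxE map_mxM IH.
Qed.

Lemma nil_unit (Y : 'M[K]_s) e c :
  (Y - e%:M) ^+ s = 0 -> e != c -> (Y - c%:M) \in unitmx.
Proof.
move=> hn nec; rewrite unitmxE unitfE; apply/negP => /det0P [v nz vY].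
have vE : v *m (Y - e%:M) = (c - e) *: v.
  have -> : Y - e%:M = (Y - c%:M) + (c - e)%:M.
    by rewrite raddfB /= addrA subrK.
  by rewrite mulmxDr vY add0r mul_mx_scalar.
have vn k : v *m (Y - e%:M) ^+ k = (c - e) ^+ k *: v.
  elim: k => [|k IH]; first by rewrite expr0 mulmx1 scale1r.
  by rewrite exprSr mulE mulmxA IH -scalemxAl vE scalerA -exprSr.
have := vn s; rewrite hn mulmx0 => /esym/eqP; rewrite scalemx_eq0 (negbTE nz).
by rewrite orbF expf_eq0 subr_eq0 eq_sym (negbTE nec) andbF.
Qed.

Lemma blockX t (A : 'M[K]_s) (B : 'M[K]_(s, t)) (D : 'M[K]_t) n :
  exists Bn, (block_mx A B 0 D : 'M_(s + t)) ^+ n = block_mx (A ^+ n) Bn 0 (D ^+ n).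
Proof.
elim: n => [|n [Bn IH]].
  by exists 0; rewrite !expr0 -scalar_mx_block.
exists (A *m Bn + B *m D ^+ n).
rewrite exprS IH mulE mulmx_block !mulmx0 !mul0mx !addr0 add0r.
by rewrite !exprS.
Qed.

Lemma sub_block t (A : 'M[K]_s) (B : 'M[K]_(s, t)) (D : 'M[K]_t) c :
  (block_mx A B 0 D : 'M_(s + t)) - c%:M = block_mx (A - c%:M) B 0 (D - c%:M).
Proof.
by rewrite [c%:M](scalar_mx_block s t) opp_block_mx add_block_mx !oppr0 !addr0.
Qed.

Lemma step t c (a A A' : 'M[K]_s) (b B B' : 'M[K]_(s, t)) (d D D' : 'M[K]_t) :
  block_mx A B 0 D *m block_mx a b 0 d = block_mx a b 0 d *m block_mx A' B' 0 D' ->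
  (A - c%:M) ^+ s = 0 -> (A' - c%:M) ^+ s = 0 ->
  D - c%:M \in unitmx -> D' - c%:M \in unitmx ->
  (\rank (block_mx a b 0 d) <= \rank a + \rank d)%N.
Proof.
set Th := block_mx A B 0 D; set Ph := block_mx a b 0 d; set Rh := block_mx A' B' 0 D'.
move=> E nA nA' uD uD'.
have E1 n : (Th - c%:M) ^+ n *m Ph = Ph *m (Rh - c%:M) ^+ n.
  elim: n => [|n IH]; first by rewrite !expr0 mul1mx mulmx1.
  rewrite !exprSr !mulE -mulmxA mulmxBl E -scalar_mxC -mulmxBr.
  by rewrite [LHS]mulmxA IH mulmxA.
have := E1 s; rewrite /Th /Rh !sub_block.
have [Bn ->] := blockX (A - c%:M) B (D - c%:M) s.
have [Bn' ->] := blockX (A' - c%:M) B' (D' - c%:M) s.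
rewrite nA nA' /Ph !mulmx_block !mulmx0 !mul0mx !add0r.
move/eq_block_mx => [_ Etr _ Ebr].
set P := (D - c%:M) ^+ s in Etr Ebr; set P' := (D' - c%:M) ^+ s in Etr Ebr.
have uP : P \in unitmx by rewrite unitmxE detX unitrX // -unitmxE.
have uP' : P' \in unitmx by rewrite unitmxE detX unitrX // -unitmxE.
set Z := Bn *m invmx P; set W := - (Bn' *m invmx P').
have bE : b = Z *m d + a *m W.
  have : b *m P' = Bn *m d - a *m Bn' by rewrite Etr addrC addKr.
  move/(congr1 (mulmx^~ (invmx P'))); rewrite mulmxK // => ->.
  rewrite mulmxBl /W mulmxN !mulmxA; congr (_ - _).
  have dE : d *m invmx P' = invmx P *m d.
    apply: (can_inj (mulKmx uP)).
    by rewrite mulmxA Ebr mulmxK // mulmxA mulmxV // mul1mx.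
  by rewrite /Z -!mulmxA dE.
have ->: block_mx a b 0 d = block_mx 1%:M Z 0 1%:M *m (block_mx a 0 0 d *m block_mx 1%:M W 0 1%:M).
  rewrite !mulmx_block !mulmx0 !mul0mx !mulmx1 !mul1mx !addr0 !add0r.
  by rewrite bE addrC mulmx0 addr0.
apply: (leq_trans (mxrankM_maxr _ _)); apply: (leq_trans (mxrankM_maxl _ _)).
by rewrite rank_diag_block_mx.
Qed.


Lemma Big_unit M (f : nat -> 'M[K]_s) c :
  (forall i, (i < M)%N -> map_mx (iter i r) (f 0%N) - c%:M \in unitmx) ->
  Big M f - c%:M \in unitmx.
Proof.
elim: M f => [|M IH] f h /=.
  by rewrite unitmxE det_mx00 unitr1.
rewrite sub_block unitmxE det_ublock unitrM -!unitmxE.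
apply/andP; split.
  have -> : f 0%N = map_mx (iter 0 r) (f 0%N).
    by apply/matrixP => i j; rewrite mxE.
  exact: h 0%N isT.
apply: IH => i lti; rewrite /tw map_iterS; exact: h i.+1 lti.
Qed.

Lemma map_iter_nil (X : 'M[K]_s) e j :
  (X - e%:M) ^+ s = 0 -> (map_mx (iter j r) X - (iter j r e)%:M) ^+ s = 0.
Proof.
move=> h; elim: j => [|j IH].
  have -> : map_mx (iter 0 r) X = X by apply/matrixP => a b; rewrite mxE.
  exact: h.
rewrite -map_iterS.
have -> : map_mx (iter j r) (map_mx r X) = map_mx r (map_mx (iter j r) X).
  by apply/matrixP => a b; rewrite !mxE -iterSr iterS.
rewrite iterS -map_scalar_mx -map_mxB -map_mxX IH.
by apply/matrixP => a b; rewrite !mxE rmorph0.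
Qed.

Lemma rank_Big M : forall c (th ph rh : nat -> 'M[K]_s),
  Big M th *m Big M ph = Big M ph *m Big M rh ->
  (th 0%N - c%:M) ^+ s = 0 -> (rh 0%N - c%:M) ^+ s = 0 ->
  (forall j, (0 < j)%N -> iter j r c != c) ->
  \det (ph 0%N) = 0 ->
  (\rank (Big M ph) + M <= sz s M)%N.
Proof.
elim: M => [|M IH] c th ph rh E nth nrh dis dph /=; first by rewrite mxrank0.
have Ebr : Big M (tw th) *m Big M (tw ph) = Big M (tw ph) *m Big M (tw rh).
  move: E => /=; rewrite !mulmx_block !mul0mx !add0r.
  by move/eq_block_mx => [_ _ _ ->].
have unil (f : nat -> 'M[K]_s) : (f 0%N - c%:M) ^+ s = 0 ->
    Big M (tw f) - c%:M \in unitmx.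
  move=> nf; apply: Big_unit => i _; rewrite /tw map_iterS.
  apply: (nil_unit (e := iter i.+1 r c)); first exact: map_iter_nil.
  exact: dis.
have rk := step E nth nrh (unil _ nth) (unil _ nrh).
have ra : (\rank (ph 0%N) < s)%N.
  rewrite ltn_neqAle rank_leq_row andbT; apply/negP => /eqP hr.
  have : row_free (ph 0%N) by rewrite /row_free hr.
  by rewrite row_free_unit unitmxE dph unitr0.
have := IH (r c) (tw th) (tw ph) (tw rh) Ebr.
have twn (f : nat -> 'M[K]_s) : (f 0%N - c%:M) ^+ s = 0 ->
    (tw f 0%N - (r c)%:M) ^+ s = 0.
  move=> nf; have := map_iter_nil 1 nf.
  have -> : map_mx (iter 1 r) (f 0%N) = tw f 0%N by apply/matrixP => a b; rewrite !mxE.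
  by [].
move=> /(_ (twn _ nth) (twn _ nrh)).
have dis' : forall j, (0 < j)%N -> iter j r (r c) != r c.
  move=> j j0; rewrite -iterSr iterS (inj_eq (@r_inj)); exact: dis.
move=> /(_ dis'); rewrite /tw det_map_mx dph rmorph0 => /(_ erefl) h.
rewrite addnS; apply: (leq_trans _ (leq_add (ra : (\rank (ph 0%N)).+1 <= s)%N h)).
by rewrite addSn ltnS addnA leq_add2r.
Qed.

End Frob.

Lemma iter_r0 (K : fieldType) (q : nat) (r : K -> K) (q_gt0 : (0 < q)%N)
  (frobD : forall x y : K, (x + y) ^+ q = x ^+ q + y ^+ q)
  (rK : forall x, r x ^+ q = x) i : iter i r 0 = 0.
Proof.
elim: i => [|i IH] //=; rewrite IH; apply: (frob_inj q_gt0 frobD).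
by rewrite rK expr0n gtn_eqF.
Qed.

Theorem lemma4 (F : finFieldType) (K : closedFieldType)
  (iota : {rmorphism {fraction {poly F}} -> K})
  (Halg : integralRange iota)
  (s : nat) (theta phi rho : seq 'M[K]_s) :
  let q := #|F| in
  let T := iota (tofrac 'X) in
  (sdel theta - T%:M) ^+ s = 0 ->
  (forall k, smul q theta phi k = smul q phi rho k) ->
  (sdel rho - T%:M) ^+ s = 0 ->
  (forall x y : seq 'rV[K]_s,
      (forall k, smul q x phi k = smul q y phi k) ->
      forall k, scoef x k = scoef y k) ->
  \det (sdel phi) != 0.
Proof.
move=> q T nth E nrh inj; apply/eqP => det0.
have [p pr pF] := finPcharP F.
have pK : p \in [pchar K].
  apply: (rmorph_pchar iota); apply: (rmorph_pchar (@tofrac _)).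
  exact: (rmorph_pchar polyC).
have q_gt1 : (1 < q)%N by apply: finNzRing_gt1.
have q_gt0 : (0 < q)%N by apply: ltnW.
have qE : q = (p ^ logn p q)%N := card_pprimeChar pF.
have frobD (x y : K) : (x + y) ^+ q = x ^+ q + y ^+ q.
  apply: exprDn_pchar; rewrite (eq_pnat _ (pcharf_eq pK)) qE pnatX pnat_id //.
pose r : K -> K := qroot q.
have rK (x : K) : r x ^+ q = x.
  have := xchooseP (qroot_ex q.-1 x) => /eqP h.
  by rewrite -[in LHS](prednK q_gt0); exact: h.
have frobit j y : (iter j r y) ^+ (q ^ j) = y.
  elim: j => [|j IH]; first by rewrite expn0 expr1.
  by rewrite iterS expnS exprM rK IH.
have dis j : (0 < j)%N -> iter j r T != T.
  move=> j0; apply/eqP => h.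
  have hT := frobit j T; rewrite h in hT.
  have : iota (tofrac ('X^(q ^ j) - 'X)) = 0.
    by rewrite !(rmorphB, rmorphXn) /= hT subrr.
  move/eqP; rewrite fmorph_eq0 tofrac_eq0 subr_eq0 => /eqP hX.
  have := congr1 (fun P : {poly F} => size P) hX; rewrite size_polyXn size_polyX => -[] hq.
  have : (q ^ 1 <= q ^ j)%N by rewrite leq_exp2l.
  by rewrite hq expn1 leqNgt q_gt1.
pose th := scoef theta; pose ph := scoef phi; pose rh := scoef rho.
pose d := size phi; pose N := (s * d).+1; pose M := (N + d)%N.
have EB : Big r M th *m Big r M ph = Big r M ph *m Big r M rh.
  by rewrite !(Big_mul q_gt0 frobD rK); apply: Big_ext => k; exact: E.
have hr := rank_Big q_gt0 frobD rK EB nth nrh dis det0.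
set Phi := Big r M ph in hr EB.
pose C := (kermx Phi :&: Pr K s M N)%MS.
have szE n : sz s n = (n * s)%N by elim: n => //= n IH; rewrite IH mulSn.
have rC : (0 < \rank C)%N.
  have h1 := mxrank_sum_cap (kermx Phi) (Pr K s M N).
  have h2 := rank_leq_col (kermx Phi + Pr K s M N)%MS.
  rewrite mxrank_ker rank_Pr ?leq_addr // in h1.
  have eM := szE M; have eN := szE N.
  have e1 : (M * s = N * s + d * s)%N by rewrite mulnDl.
  have e2 : (N * s = s * d * s + s)%N by rewrite mulSn addnC.
  have e3 : (d * s = s * d)%N by rewrite mulnC.
  rewrite -/C in h1. lia.
pose v := nz_row C.
have nzv : v != 0 by rewrite nz_row_eq0 -mxrank_eq0 -lt0n.
have vC : (v <= C)%MS := nz_row_sub C.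
have vK : v *m Phi = 0.
  by apply/sub_kermxP; apply: submx_trans vC (capmxSl _ _).
have /submxP [w vw] := submx_trans vC (capmxSr _ _).
pose x := mkseq (coef v) N.
have xE k : (k < M)%N -> scoef x k = coef v k.
  move=> kM; rewrite /scoef /x; case: (ltnP k N) => kN.
    by rewrite nth_mkseq.
  by rewrite nth_default ?size_mkseq // vw coef_Pr.
have coefK k : (k < M)%N -> coef v k = 0.
  move=> kM; rewrite -xE // (inj x [::]) ?/scoef ?nth_nil // => k'.
  rewrite /smul [RHS]big1 => [|i _]; last by rewrite /scoef nth_nil mul0mx.
  case: (ltnP k' M) => k'M.
    transitivity (sm r (coef v) ph k').
      apply: eq_bigr => i _; rewrite xE //.
      have := ltn_ord i; rewrite ltnS => hi; exact: leq_ltn_trans hi k'M.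
    by rewrite -coef_Big // vK coef0.
  apply: big1 => i _; rewrite /scoef.
  case: (ltnP i N) => iN.
    rewrite (nth_default _ (_ : (size phi <= k' - i)%N)); last first.
      rewrite /M /d in k'M; lia.
    have -> : map_mx (iter i r) 0 = 0 :> 'M[K]_s.
      by apply/matrixP => a b; rewrite !mxE (iter_r0 q_gt0 frobD rK).
    by rewrite mulmx0.
  by rewrite nth_default ?size_mkseq // mul0mx.
have := coef_eq0 coefK; move/eqP; by rewrite (negbTE nzv).
Qed.
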